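(* Let $k\ge3$, let $m_1,\dots,m_{k-1}\ge0$ be integers, and fix $w\in\mathcal P(\mathcal M_{k-2})$ (letters $e_1,\dots,e_{k-2}$ with counts $m_1,\dots,m_{k-2}$) and $\Pi\in\mathcal P([m_{k-2}\times m_{k-1}])$. Consider the words $W\in\mathcal P(\mathcal M_{k-1})$ such that: (i) deleting all letters $e_{k-1}$ from $W$ gives $w$, and (ii) deleting all letters $e_1,\dots,e_{k-3}$ from $W$ and renaming $e_{k-2}\mapsto a$, $e_{k-1}\mapsto b$ gives $\Pi$. The number of such $W$ is $$\prod_{r=0}^{m_{k-2}}\binom{\pi^\star(\Pi)(r)+\sum_{l=1}^{k-3}\pi^\star_{k-2,l}(w)(r)}{\pi^\star(\Pi)(r)}.$$ All such $W$ yield the same value $S(w)\cdot\pi^\star(\Pi)=\sum_{r=0}^{m_{k-2}}S_r(w)\pi^\star(\Pi)(r)$ of the count of position tuples $p_1<\dots<p_{k-1}$ with letter $e_j$ at $p_j$. Summing these counts over all $(w,\Pi)$ gives $\binom{m_1+\cdots+m_{k-1}}{m_1,\ldots,m_{k-1}}$.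
   Context: $\mathcal P(\mathcal M_d)$ is the set of words of length $m_1+\dots+m_d$ in letters $e_1,\dots,e_d$ containing exactly $m_i$ copies of $e_i$. For a word $w$ and $i\ne j$, $\pi_{i,j}(w)(s)$ ($s=1,\dots,m_j$) is the number of occurrences of $e_i$ preceding the $s$-th occurrence of $e_j$, and $\pi^\star_{i,j}(w)(r)=\#\{s:\pi_{i,j}(w)(s)=r\}$. $S_t(w)$, for $w\in\mathcal P(\mathcal M_d)$ and $0\le t\le m_d$, is the number of position tuples $p_1<\dots<p_d$ in $w$ with letter $e_i$ at $p_i$ for each $i$, and $p_d$ at or before the $t$-th occurrence of $e_d$. $\mathcal P([m_{k-2}\times m_{k-1}])$ is the set of words with $m_{k-2}$ letters $a$ and $m_{k-1}$ letters $b$. For such $\Pi$, $\pi(\Pi)(s)$ is the number of $a$'s before the $s$-th $b$, and $\pi^\star(\Pi)(r)=\#\{s:\pi(\Pi)(s)=r\}$ for $r=0,\dots,m_{k-2}$. An empty sum over $l$ is $0$. *)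

(* Defs.v *)
(* Words are seq nat; the letter e_i is the natural number i (1-based).
   Words over {a,b} are seq bool with a = false, b = true. *)
From mathcomp Require Import all_boot.
Set Implicit Arguments. Unset Strict Implicit. Unset Printing Implicit Defensive.

Fixpoint allseqs (T : Type) (A : seq T) (n : nat) : seq (seq T) :=
  if n is n'.+1 then [seq x :: s | x <- A, s <- allseqs A n'] else [:: [::]].

Definition totlen (d : nat) (m : nat -> nat) : nat := \sum_(1 <= i < d.+1) m i.

Definition inPM (d : nat) (m : nat -> nat) (w : seq nat) : bool :=
  (size w == totlen d m) && all (fun i => count_mem i w == m i) (iota 1 d).

Definition PM (d : nat) (m : nat -> nat) : seq (seq nat) :=
  [seq w <- allseqs (iota 1 d) (totlen d m) | inPM d m w].

Definition inPab (p q : nat) (Pi : seq bool) : bool :=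
  (count_mem false Pi == p) && (count_mem true Pi == q).

Definition Pab (p q : nat) : seq (seq bool) :=
  [seq Pi <- allseqs [:: false; true] (p + q) | inPab p q Pi].

Definition positions (T : eqType) (x : T) (w : seq T) : seq nat :=
  [seq p <- iota 0 (size w) | nth x w p == x].

(* pi_{i,j}(w)(s), s >= 1: number of occurrences of i preceding the s-th occurrence of j *)
Definition piw (T : eqType) (i j : T) (w : seq T) (s : nat) : nat :=
  count_mem i (take (nth 0 (positions j w) s.-1) w).

Definition pistar (T : eqType) (i j : T) (w : seq T) (r : nat) : nat :=
  count (fun s => piw i j w s == r) (iota 1 (count_mem j w)).

Definition piab (Pi : seq bool) (s : nat) : nat := piw false true Pi s.
Definition piabstar (Pi : seq bool) (r : nat) : nat := pistar false true Pi r.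

Definition postuples (d : nat) (w : seq nat) : seq (seq nat) :=
  [seq p <- allseqs (iota 0 (size w)) d |
     sorted ltn p && (map (fun q => nth 0 w q) p == iota 1 d)].

(* S_t(w) for w in P(M_d): those tuples whose p_d is at or before the t-th occurrence of e_d,
   i.e. at most t occurrences of e_d occur at positions <= p_d *)
Definition St (d : nat) (w : seq nat) (t : nat) : nat :=
  count (fun p => count_mem d (take (last 0 p).+1 w) <= t) (postuples d w).

Definition multinomial (d : nat) (m : nat -> nat) : nat :=
  (totlen d m)`! %/ \prod_(1 <= i < d.+1) (m i)`!.

Definition compatible (k : nat) (w : seq nat) (Pi : seq bool) (W : seq nat) : bool :=
  (filter (fun x => x != k.-1) W == w) &&
  (map (fun x => x == k.-1) (filter (fun x => (x == k - 2) || (x == k.-1)) W) == Pi).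

Definition prodformula (k : nat) (m : nat -> nat) (w : seq nat) (Pi : seq bool) : nat :=
  \prod_(0 <= r < (m (k - 2)).+1)
     'C(piabstar Pi r + \sum_(1 <= l < k - 2) pistar (k - 2) l w r, piabstar Pi r).

(* Main.v *)
Require Import Defs.
From mathcomp Require Import all_boot zify.
Set Implicit Arguments. Unset Strict Implicit. Unset Printing Implicit Defensive.

Lemma cnt_sum (T : Type) (a : pred T) (s : seq T) : count a s = \sum_(x <- s) a x.
Proof. by elim: s => [|x s IH]; rewrite ?big_nil ?big_cons //= IH. Qed.

Lemma sum_ind (T : eqType) (s : seq T) (a : T) (g : nat) :
  \sum_(x <- s) ((x == a) * g) = count_mem a s * g.
Proof. elim: s => [|x s IH]; rewrite ?big_nil ?big_cons //= IH mulnDl //. Qed.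

Lemma mem_allseqs (T : eqType) (A : seq T) n s :
  (s \in allseqs A n) = (size s == n) && all (mem A) s.
Proof.
elim: n s => [|n IH] [|x s] //=.
- by apply/negbTE/allpairsP => -[[y t] [_ _ //]].
- apply/allpairsP/idP => [[[y t] /= [Hy Ht [-> ->]]]|/andP[Hs /andP[Hx Ha]]].
    by move: Ht; rewrite IH eqSS Hy => /andP[-> ->].
  by exists (x, s); split => //=; rewrite IH -eqSS Hs.
Qed.

Lemma uniq_allseqs (T : eqType) (A : seq T) n : uniq A -> uniq (allseqs A n).
Proof.
move=> uA; elim: n => [|n IH] //=.
apply: allpairs_uniq => //.
by move=> [x s] [y t] _ _ /= [-> ->].
Qed.

Lemma count_allseqsS (T : Type) (A : seq T) n (P : pred (seq T)) :
  count P (allseqs A n.+1) = \sum_(x <- A) count (fun s => P (x :: s)) (allseqs A n).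
Proof.
rewrite cnt_sum /= big_allpairs_dep; apply: eq_bigr => x _.
by rewrite cnt_sum.
Qed.

Definition fw (b : nat) (W : seq nat) := filter (fun x => x != b) W.
Definition mf (b c : nat) (W : seq nat) :=
  map (fun x => x == b) (filter (fun x => (x == c) || (x == b)) W).
Definition cp b c w Pi W := (fw b W == w) && (mf b c W == Pi).
Arguments cp : simpl never.

Fixpoint pst (T : eqType) (i j : T) (s : seq T) (r : nat) : nat :=
  if s is x :: s' then
    ((x == j) && (r == 0)) +
    (if x == i then (if r is r'.+1 then pst i j s' r' else 0) else pst i j s' r)
  else 0.

Fixpoint pstn (c : nat) (s : seq nat) (r : nat) : nat :=
  if s is x :: s' then
    ((x != c) && (r == 0)) +
    (if x == c then (if r is r'.+1 then pstn c s' r' else 0) else pstn c s' r)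
  else 0.

Definition F c w Pi := \prod_(0 <= r < (count_mem c w).+1)
   'C(pst false true Pi r + pstn c w r, pst false true Pi r).

Lemma cp_cons_b b c w Pi s : b != c ->
  cp b c w Pi (b :: s) = (if Pi is true :: Pi' then cp b c w Pi' s else false).
Proof.
move=> bc; rewrite /cp /fw /mf /= eqxx /= orbT /= eqxx.
by case: Pi => [|[] Pi]; rewrite ?eqseq_cons /= ?andbF.
Qed.

Lemma cp_cons_nb b c w Pi x s : x != b ->
  cp b c w Pi (x :: s) = (if w is y :: w' then (y == x) &&
     (if x == c then (if Pi is false :: Pi' then cp b c w' Pi' s else false)
      else cp b c w' Pi s) else false).
Proof.
move=> xb; rewrite /cp /fw /mf /= xb (negbTE xb) orbF.
case: (x == c) => /=; case: w => [|y w] //=; rewrite eqseq_cons [x == y]eq_sym.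
  by rewrite (negbTE xb); case: Pi => [|[] Pi]; rewrite ?eqseq_cons /= ?andbF ?andbA.
by rewrite andbA.
Qed.

Lemma F_nil c Pi : F c [::] Pi = 1.
Proof. by rewrite /F /= big_nat1 addn0 binn. Qed.

Lemma pst_nil (T : eqType) (i j : T) r : pst i j [::] r = 0. Proof. by []. Qed.

Lemma F_Pinil c w : F c w [::] = 1.
Proof. by rewrite /F big1 // => r _; rewrite bin0. Qed.

Lemma F2 c w Pi : F c (c :: w) (true :: Pi) = F c (c :: w) Pi.
Proof.
rewrite /F /= eqxx add1n [LHS]big_nat_recl // [RHS]big_nat_recl //= !addn0 !binn.
by congr (_ * _); apply: eq_bigr => r _; rewrite !add0n.
Qed.

Lemma F3 c w Pi : F c (c :: w) (false :: Pi) = F c w Pi.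
Proof.
rewrite /F /= eqxx add1n big_nat_recl //= !add0n bin0 mul1n.
by apply: eq_bigr => r _; rewrite !add0n.
Qed.

Lemma F5 c y w Pi : y != c -> F c (y :: w) (false :: Pi) = F c w (false :: Pi).
Proof.
move=> yc; rewrite /F /= (negbTE yc) add0n [LHS]big_nat_recl // [RHS]big_nat_recl //=.
rewrite !add0n !bin0 !mul1n.
by apply: eq_bigr => r _; rewrite !add0n.
Qed.

Lemma F6 c y w Pi : y != c ->
  F c (y :: w) (true :: Pi) = F c (y :: w) Pi + F c w (true :: Pi).
Proof.
move=> yc; rewrite /F /= (negbTE yc) add0n [LHS]big_nat_recl // [X in _ = X + _]big_nat_recl // [X in _ = _ + X]big_nat_recl //=.
under [X in _ * X = _]eq_bigr => i _ do rewrite ?add0n.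
under [X in _ = _ * X + _]eq_bigr => i _ do rewrite ?add0n.
under [X in _ = _ + _ * X]eq_bigr => i _ do rewrite ?add0n.
rewrite -mulnDl; congr (_ * _).
set a := pst false true Pi 0; set g := pstn c w 0.
have -> : 1 + a + (1 + g) = (a + g + 1).+1 by lia.
have -> : 1 + a = a.+1 by lia.
rewrite binS addnC; congr ('C(_, _) + 'C(_, _)); lia.
Qed.

Lemma sum_supp1 (A : seq nat) a (f : nat -> nat) : uniq A -> a \in A ->
  (forall x, x != a -> f x = 0) -> \sum_(x <- A) f x = f a.
Proof.
move=> uA aA H; rewrite (eq_bigr (fun x => (x == a) * f a)).
  by rewrite sum_ind count_uniq_mem // aA mul1n.
move=> x _; case: eqP => [->|/eqP xa]; first by rewrite mul1n.
by rewrite H.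
Qed.

Lemma sum_supp2 (A : seq nat) a1 a2 (f : nat -> nat) : uniq A -> a1 \in A -> a2 \in A ->
  a1 != a2 -> (forall x, x != a1 -> x != a2 -> f x = 0) ->
  \sum_(x <- A) f x = f a1 + f a2.
Proof.
move=> uA aA1 aA2 a12 H; rewrite (eq_bigr (fun x => (x == a1) * f a1 + (x == a2) * f a2)).
  by rewrite big_split /= !sum_ind !count_uniq_mem // aA1 aA2 !mul1n.
move=> x _; case: eqP => [->|/eqP xa]; first by rewrite (negbTE a12) /= mul1n mul0n addn0.
case: eqP => [->|/eqP xa2]; first by rewrite /= mul0n mul1n.
by rewrite H.
Qed.

Lemma count_false (T : Type) (P : pred T) s : (forall x, P x = false) -> count P s = 0.
Proof. by move=> H; rewrite (eq_count (a2 := pred0)) // count_pred0. Qed.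

Lemma count_cp (A : seq nat) b c : uniq A -> b \in A -> b != c ->
  forall n w Pi, all (mem A) w -> b \notin w -> count_mem c w = count_mem false Pi ->
  n = size w + count_mem true Pi -> count (cp b c w Pi) (allseqs A n) = F c w Pi.
Proof.
move=> uA bA bc; elim=> [|n IH] w Pi Aw bw cP hn.
  case: w Aw bw cP hn => [|y w] /= Aw bw cP hn; last by lia.
  case: Pi cP hn => [|[] Pi] /= cP hn; try lia.
  by rewrite F_nil /= /cp /fw /mf.
rewrite count_allseqsS.
case: w Aw bw cP hn => [|y w] Aw bw cP hn.
  rewrite (@sum_supp1 A b) //; last first.
    by move=> x xb; apply: count_false => s; rewrite cp_cons_nb.
  under eq_count => s do rewrite cp_cons_b //.
  case: Pi cP hn => [|[] Pi] /= cP hn; try lia.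
  by rewrite F_nil -(F_nil c Pi) IH //=; lia.
move: Aw bw => /= /andP[yA Aw]; rewrite inE negb_or => /andP[nby bw].
rewrite (@sum_supp2 A b y) //; last first.
  move=> x xb xy; apply: count_false => s; rewrite cp_cons_nb //.
  by rewrite eq_sym (negbTE xy).
under eq_count => s do rewrite cp_cons_b //.
have yb : y != b by rewrite eq_sym.
under [X in _ + X]eq_count => s do rewrite cp_cons_nb // eqxx /=.
case: (eqVneq y c) => [yc|ync].
  subst y; move: cP hn; rewrite /= eqxx.
  case: Pi => [|[] Pi] /= cP hn; try lia.
  { rewrite (@count_false _ (fun _ => false)) // addn0 F2 IH //.
    all: rewrite /= ?inE ?negb_or ?yA ?Aw ?nby ?bw ?eqxx /= //; lia. }
  { rewrite (@count_false _ (fun _ => false)) // add0n F3 IH //.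
    all: rewrite /= ?inE ?negb_or ?yA ?Aw ?nby ?bw ?eqxx /= //; lia. }
move: cP hn; rewrite /= (negbTE ync).
case: Pi => [|[] Pi] /= cP hn.
{ rewrite (@count_false _ (fun _ => false)) // add0n F_Pinil IH ?F_Pinil //.
  all: rewrite /= ?inE ?negb_or ?yA ?Aw ?nby ?bw ?eqxx /= //; lia. }
{ rewrite F6 // [X in X + _]IH; last 4 first.
  all: try (rewrite /= ?inE ?negb_or ?yA ?Aw ?nby ?bw ?eqxx ?(negbTE ync) /= //; lia).
  rewrite IH //.
  all: rewrite /= ?inE ?negb_or ?yA ?Aw ?nby ?bw ?eqxx ?(negbTE ync) /= //; lia. }
{ rewrite (@count_false _ (fun _ => false)) // add0n F5 // IH //.
  all: rewrite /= ?inE ?negb_or ?yA ?Aw ?nby ?bw ?eqxx /= //; lia. }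
Qed.

Lemma positions_cons (T : eqType) (x y : T) s :
  positions x (y :: s) =
  if y == x then 0 :: map succn (positions x s) else map succn (positions x s).
Proof.
rewrite /positions /= -[1]/(1 + 0) iotaDl filter_map.
by case: (y == x).
Qed.

Lemma size_positions (T : eqType) (x : T) s : size (positions x s) = count_mem x s.
Proof.
elim: s => [|y s IH] //; rewrite positions_cons /= eq_sym.
by case: (x == y); rewrite /= size_map IH.
Qed.

Lemma pistar_pst (T : eqType) (i j : T) s r : i != j -> pistar i j s r = pst i j s r.
Proof.
move=> ij; elim: s r => [|y s IH] r; first by rewrite /pistar /= .
rewrite /pistar /=.
case: (eqVneq y j) => [yj|yj] /=.
  subst y; rewrite [j == i]eq_sym (negbTE ij) /=.
  rewrite add0n -[2]/(1 + 1) iotaDl count_map -IH /pistar.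
  have -> : piw i j (j :: s) 1 = 0 by rewrite /piw positions_cons eqxx.
  congr (_ + _); first by rewrite eq_sym.
  apply: eq_in_count => t; rewrite mem_iota => /andP[t1 t2] /=.
  rewrite /piw positions_cons eqxx /=.
  case: t t1 t2 => [//|t] t1 t2; rewrite add0n /= (nth_map 0) /=.
    by rewrite [j == i]eq_sym (negbTE ij).
  rewrite size_positions; lia.
rewrite !add0n.
have E : forall t, t \in iota 1 (count_mem j s) ->
    piw i j (y :: s) t = (y == i) + piw i j s t.
  move=> t; rewrite mem_iota => /andP[t1 t2].
  rewrite /piw positions_cons (negbTE yj) (nth_map 0) ?size_positions; last by lia.
  by rewrite /= eq_sym.
rewrite (eq_in_count (a2 := fun t => (y == i) + piw i j s t == r)); last first.
  by move=> t /E ->.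
case: (y == i) => /=; last by rewrite -IH.
case: r => [|r] /=.
  by apply: count_false => t; rewrite add1n.
by rewrite -IH /pistar; apply: eq_count => t; rewrite add1n eqSS.
Qed.

Lemma sum_pst_pstn c w r : all (fun x => (0 < x) && (x <= c)) w ->
  \sum_(1 <= l < c) pst c l w r = pstn c w r.
Proof.
elim: w r => [|x w IH] r /=; first by move=> _; rewrite big1.
move=> /andP[/andP[x0 xc] Aw]; rewrite big_split /=.
rewrite (eq_bigr (fun l => (l == x) * (r == 0))); last first.
  by move=> l _; rewrite eq_sym; case: (_ == _); case: (_ == _).
rewrite sum_ind count_uniq_mem; last by rewrite /index_iota iota_uniq.
rewrite mem_index_iota x0 /= ltn_neqAle xc andbT.
congr (_ + _); first by case: (x != c); case: (r == 0).
case: (x == c); last exact: IH.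
by case: r => [|r]; [rewrite big1 | exact: IH].
Qed.

Lemma count_sum_mem (s : seq nat) (w : seq nat) : uniq s ->
  \sum_(i <- s) count_mem i w = count (mem s) w.
Proof.
elim: s => [|x s IH] /= us; first by rewrite big_nil count_pred0.
move: us => /andP[xs us]; rewrite big_cons IH //.
rewrite -(count_predUI (pred1 x) (mem s)).
rewrite [X in _ + X](@count_false _ (predI _ _)); last first.
  by move=> y /=; apply/negbTE; apply/andP => -[/eqP -> ys]; rewrite ys in xs.
by rewrite addn0; apply: eq_count => y; rewrite /= inE.
Qed.

Lemma inPM_range d m w : inPM d m w -> all (fun x => x \in iota 1 d) w.
Proof.
move=> /andP[/eqP hs /allP hc].
have : count (mem (iota 1 d)) w = size w.
  rewrite -count_sum_mem ?iota_uniq // hs /totlen.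
  rewrite big_seq [RHS]big_nat_cond.
  rewrite /index_iota subSS subn0.
  apply: eq_big => [i|i Hi]; first by rewrite mem_iota andbT add1n.
  by move: (hc i Hi) => /eqP.
by move/eqP; rewrite -all_count.
Qed.

Lemma totlenS d m : totlen d.+1 m = totlen d m + m d.+1.
Proof. by rewrite /totlen big_nat_recr. Qed.

Lemma size_fw b W : size W = size (fw b W) + count_mem b W.
Proof.
rewrite /fw size_filter -(count_predC (pred1 b) W) addnC.
by congr (_ + _); apply: eq_count.
Qed.

Lemma count_fw b i W : i != b -> count_mem i (fw b W) = count_mem i W.
Proof.
move=> ib; rewrite /fw count_filter; apply: eq_count => y /=.
by case: eqP => // ->; rewrite ib.
Qed.

Lemma count_mf_true b c W : count_mem true (mf b c W) = count_mem b W.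
Proof.
rewrite /mf count_map count_filter; apply: eq_count => y /=.
by case: (eqVneq y b) => [->|yb]; rewrite ?eqxx ?orbT // andbC.
Qed.

Lemma count_mf_false b c W : c != b -> count_mem false (mf b c W) = count_mem c W.
Proof.
move=> cb; rewrite /mf count_map count_filter; apply: eq_count => y /=.
case: (eqVneq y b) => [->|yb] /=; first by rewrite eq_sym (negbTE cb).
by rewrite orbF.
Qed.

Lemma cp_inPM d m c w Pi W : inPM d m w -> count_mem true Pi = m d.+1 ->
  cp d.+1 c w Pi W -> inPM d.+1 m W.
Proof.
move=> hw hPi /andP[/eqP fW /eqP mW].
have cb : count_mem d.+1 W = m d.+1 by rewrite -hPi -mW count_mf_true.
move: (hw) => /andP[/eqP hs /allP hc].
apply/andP; split.
  by rewrite (size_fw d.+1) fW hs cb totlenS.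
apply/allP => i; rewrite mem_iota => /andP[i1 i2].
case: (eqVneq i d.+1) => [->|ib]; first by rewrite cb.
rewrite -(count_fw _ ib) fW; apply: hc; rewrite mem_iota; lia.
Qed.

Lemma inPM_range2 d m w : inPM d m w -> all (fun x => (0 < x) && (x <= d)) w.
Proof.
move/inPM_range => /allP H; apply/allP => x /H; rewrite mem_iota; lia.
Qed.

Lemma part1 d m w Pi : 1 <= d -> inPM d m w -> inPab (m d) (m d.+1) Pi ->
  count (cp d.+1 d w Pi) (PM d.+1 m) =
  \prod_(0 <= r < (m d).+1)
     'C(piabstar Pi r + \sum_(1 <= l < d) pistar d l w r, piabstar Pi r).
Proof.
move=> d1 hw /andP[/eqP hf /eqP ht].
have R := inPM_range2 hw.
have cd : count_mem d w = m d.
  by move: hw => /andP[_ /allP H]; apply/eqP; apply: H; rewrite mem_iota; lia.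
rewrite /PM count_filter.
rewrite (eq_count (a2 := cp d.+1 d w Pi)); last first.
  move=> W /=; case H: (cp _ _ _ _ _) => //.
  by rewrite (cp_inPM hw ht H).
rewrite (@count_cp (iota 1 d.+1) d.+1 d) ?iota_uniq //; last 6 first.
- by rewrite mem_iota; lia.
- by apply/eqP; lia.
- apply/allP => x /(allP R) H; rewrite inE mem_iota; lia.
- by apply/negP => /(allP R); lia.
- by rewrite cd hf.
- by rewrite totlenS ht; move: hw => /andP[/eqP -> _].
rewrite /F cd; apply: eq_bigr => r _.
rewrite /piabstar pistar_pst // -sum_pst_pstn //.
congr ('C(_ + _, _)); apply: eq_big_nat => l /andP[l1 l2].
by rewrite pistar_pst //; apply/eqP; lia.
Qed.

Lemma mem_PM d m w : (w \in PM d m) = inPM d m w.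
Proof.
rewrite /PM mem_filter; case H: (inPM d m w) => //=.
rewrite mem_allseqs; move: (H) => /andP[-> _] /=.
by apply/allP => x /(allP (inPM_range H)).
Qed.

Lemma mem_Pab p q Pi : (Pi \in Pab p q) = inPab p q Pi.
Proof.
rewrite /Pab mem_filter; case H: (inPab p q Pi) => //=.
rewrite mem_allseqs; move: (H) => /andP[/eqP <- /eqP <-].
rewrite -(count_predC (pred1 false) Pi) [X in _ + X](@eq_count _ _ (pred1 true)); last by case.
rewrite eqxx /=; by apply/allP => -[]; rewrite !inE.
Qed.

Lemma uniq_PM d m : uniq (PM d m).
Proof. by rewrite /PM filter_uniq // uniq_allseqs // iota_uniq. Qed.

Lemma uniq_Pab p q : uniq (Pab p q).
Proof. by rewrite /Pab filter_uniq // uniq_allseqs. Qed.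

Lemma fw_PM d m W : inPM d.+1 m W -> inPM d m (fw d.+1 W).
Proof.
move=> hW; have R := inPM_range2 hW.
move: hW => /andP[/eqP hs /allP hc].
have cb : count_mem d.+1 W = m d.+1 by apply/eqP; apply: hc; rewrite mem_iota; lia.
apply/andP; split.
  by move: hs; rewrite (size_fw d.+1) cb totlenS => /eqP; rewrite eqn_add2r.
apply/allP => i; rewrite mem_iota => Hi.
rewrite count_fw; last by apply/eqP; lia.
by apply: hc; rewrite mem_iota; lia.
Qed.

Lemma mf_Pab d m W : 1 <= d -> inPM d.+1 m W -> inPab (m d) (m d.+1) (mf d.+1 d W).
Proof.
move=> d1 /andP[_ /allP hc].
rewrite /inPab count_mf_true count_mf_false; last by apply/eqP; lia.
by rewrite !hc // mem_iota; lia.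
Qed.

Lemma sum_const (T : Type) (s : seq T) c : \sum_(x <- s) c = size s * c.
Proof. by elim: s => [|x s IH]; rewrite ?big_nil ?big_cons // IH mulSn. Qed.

Lemma pst_nseq n : pst false true (nseq n true) 0 = n.
Proof. by elim: n => //= n ->. Qed.

Lemma pstn0 w : all (fun x => x != 0) w -> pstn 0 w 0 = size w.
Proof. by elim: w => //= x w IH /andP[x0 /IH ->]; rewrite x0 (negbTE x0). Qed.

Lemma count_fw_eq d m w : inPM d m w ->
  count (fun W => fw d.+1 W == w) (PM d.+1 m) = 'C(totlen d m + m d.+1, m d.+1).
Proof.
move=> hw; have R := inPM_range2 hw.
rewrite /PM count_filter.
rewrite (eq_count (a2 := cp d.+1 0 w (nseq (m d.+1) true))); last first.
  move=> W /=; apply/andP/idP => [[fW hW]|H].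
    rewrite /cp fW /=; have RW := inPM_range2 hW.
    have hall : all (pred1 true) (mf d.+1 0 W).
      rewrite /mf all_map; apply/allP => y; rewrite mem_filter => /andP[Hy yW] /=.
      move: Hy => /orP[/eqP y0|/eqP ->]; last by rewrite /= eqxx.
      by move/allP: RW => /(_ y yW); rewrite y0.
    move/all_pred1P: (hall) => E.
    have cb : count_mem d.+1 W = m d.+1.
      by move: hW => /andP[_ /allP hc]; apply/eqP; apply: hc; rewrite mem_iota; lia.
    rewrite E -cb -(count_mf_true d.+1 0 W) {2}E count_nseq /= mul1n.
    by [].
  split; first by case/andP: H.
  by apply: (cp_inPM hw _ H); rewrite count_nseq /= mul1n.
have z0 : count_mem 0 w = 0.
  by apply/count_memPn; apply/negP => /(allP R).
rewrite (@count_cp (iota 1 d.+1) d.+1 0) ?iota_uniq //; last 5 first.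
- by rewrite mem_iota; lia.
- apply/allP => x /(allP R) H; rewrite inE mem_iota; lia.
- by apply/negP => /(allP R); lia.
- by rewrite z0 count_nseq.
- by rewrite totlenS count_nseq /= mul1n; move: hw => /andP[/eqP -> _].
rewrite /F z0 big_nat1 pst_nseq pstn0; last by apply/allP => x /(allP R); lia.
by move: hw => /andP[/eqP -> _]; rewrite addnC.
Qed.

Lemma size_PM d m : size (PM d m) * \prod_(1 <= i < d.+1) (m i)`! = (totlen d m)`!.
Proof.
elim: d => [|d IH].
  by rewrite /PM /totlen !big_geq //= /inPM /totlen big_geq.
have -> : size (PM d.+1 m) = \sum_(w <- PM d m) count (fun W => fw d.+1 W == w) (PM d.+1 m).
  rewrite -sum1_size.
  rewrite (eq_big_seq (fun W => \sum_(w <- PM d m) (fw d.+1 W == w))); last first.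
    move=> W; rewrite mem_PM => /fw_PM H.
    rewrite -cnt_sum (eq_count (a2 := pred1 (fw d.+1 W))); last by move=> w; rewrite /= eq_sym.
    by rewrite count_uniq_mem ?uniq_PM // mem_PM H.
  by rewrite exchange_big; apply: eq_bigr => w _; rewrite cnt_sum.
rewrite (eq_big_seq (fun _ => 'C(totlen d m + m d.+1, m d.+1))); last first.
  by move=> w; rewrite mem_PM => /count_fw_eq.
rewrite sum_const big_nat_recr //= mulnA -[size _ * _ * _]mulnA [_ * \prod_(_ <= _ < _) _]mulnC mulnA IH.
rewrite totlenS -(bin_fact (leq_addl (totlen d m) (m d.+1))) addnK.
by rewrite [X in X * _ = _]mulnC -!mulnA; congr (_ * _); rewrite mulnC.
Qed.

Lemma multinomial_PM d m : multinomial d m = size (PM d m).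
Proof.
by rewrite /multinomial -size_PM mulnK // prodn_gt0 // => i; exact: fact_gt0.
Qed.

Fixpoint inc (n d : nat) : seq (seq nat) :=
  if n is n'.+1 then
    (if d is d'.+1 then inc n' d ++ map (rcons^~ n') (inc n' d') else [:: [::]])
  else (if d is 0 then [:: [::]] else [::]).

Lemma sorted_ltn_rcons (s : seq nat) z :
  sorted ltn (rcons s z) = sorted ltn s && all (fun q => q < z) s.
Proof.
elim: s => [|a s IH] //=.
rewrite !(path_sortedE ltn_trans) all_rcons IH /=.
by rewrite -!andbA; bool_congr.
Qed.

Lemma mem_inc n d p :
  (p \in inc n d) = [&& size p == d, sorted ltn p & all (fun q => q < n) p].
Proof.
elim: n d p => [|n IH] [|d] p /=.
- by case: p => [|a p]; rewrite ?inE.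
- by case: p => [|a p] //=; rewrite !andbF.
- by case: p => [|a p]; rewrite ?inE.
rewrite mem_cat IH.
case/lastP: p => [|p z].
  by rewrite /=; apply/negbTE/mapP => -[q _]; case: q.
have -> : (rcons p z \in [seq rcons p0 n | p0 <- inc n d]) = (z == n) && (p \in inc n d).
  apply/mapP/andP => [[q qin /rcons_inj [-> ->]]|[/eqP -> pin]]; first by rewrite eqxx.
  by exists p.
rewrite IH size_rcons eqSS sorted_ltn_rcons !all_rcons.
case: (eqVneq z n) => [->|zn] /=.
  rewrite ltnn ltnSn /= !andbF /=.
  apply/idP/idP => [/and3P[-> -> H1]|/and3P[-> /andP[-> H1] H2]] //=.
  by rewrite H1 /=; apply/allP => q /(allP H1) /ltnW.
rewrite orbF ltnS [z <= n]leq_eqVlt (negbTE zn) /=.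
apply/idP/idP => /and4P[-> /andP[-> H1] H2 H3]; rewrite H1 H2 //=.
  by apply/allP => q /(allP H3) /ltnW.
by apply/allP => q /(allP H1) /leq_trans; apply; apply: ltnW.
Qed.

Lemma uniq_inc n d : uniq (inc n d).
Proof.
elim: n d => [|n IH] [|d] //=.
rewrite cat_uniq IH map_inj_uniq ?IH ?andbT //; last exact: rcons_injl.
apply/hasPn => q /mapP [p _ ->].
by rewrite mem_inc all_rcons ltnn /= !andbF.
Qed.

Lemma perm_sorted n d (Q : pred (seq nat)) :
  perm_eq [seq p <- allseqs (iota 0 n) d | sorted ltn p && Q p] [seq p <- inc n d | Q p].
Proof.
apply: uniq_perm; rewrite ?filter_uniq ?uniq_allseqs ?iota_uniq ?uniq_inc //.
move=> p; rewrite !mem_filter mem_allseqs mem_inc.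
have -> : all (mem (iota 0 n)) p = all (fun q => q < n) p.
  by apply: eq_all => q; rewrite /= mem_iota.
by rewrite -!andbA; bool_congr.
Qed.

Definition TPd d (u w : seq nat) :=
  [seq p <- allseqs (iota 0 (size w)) d | sorted ltn p && (map (nth 0 w) p == u)].

Lemma map_nth_rcons (w : seq nat) x p : all (fun q => q < size w) p ->
  map (nth 0 (rcons w x)) p = map (nth 0 w) p.
Proof.
move=> H; apply/eq_in_map => q /(allP H) qw.
by rewrite nth_rcons qw.
Qed.

Lemma TP_rcons (f : seq nat -> nat) d u y w x :
  \sum_(p <- TPd d.+1 (rcons u y) (rcons w x)) f p =
  \sum_(p <- TPd d.+1 (rcons u y) w) f p +
  (x == y) * \sum_(p <- TPd d u w) f (rcons p (size w)).
Proof.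
rewrite /TPd size_rcons.
rewrite (perm_big _ (perm_sorted _ _ _)) [X in _ = X + _](perm_big _ (perm_sorted _ _ _)).
rewrite [X in _ = _ + _ * X](perm_big _ (perm_sorted _ _ _)) /=.
rewrite filter_cat big_cat filter_map big_map /=.
congr (_ + _).
  congr (\sum_(p <- _) _); apply: eq_in_filter => p.
  by rewrite mem_inc => /and3P[_ _ H]; rewrite map_nth_rcons.
rewrite (eq_in_filter (a2 := fun p => (map (nth 0 w) p == u) && (x == y))); last first.
  move=> p; rewrite mem_inc => /and3P[_ _ H] /=.
  by rewrite map_rcons eqseq_rcons map_nth_rcons // nth_rcons ltnn eqxx.
case: (x == y); last by rewrite mul0n (@eq_filter _ _ pred0) ?filter_pred0 ?big_nil // => p /=; rewrite andbF.
by rewrite mul1n; congr (\sum_(p <- _) _); apply: eq_filter => p; rewrite andbT.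
Qed.

Lemma TP_nil d W : TPd d.+1 [::] W = [::].
Proof.
rewrite /TPd (@eq_in_filter _ _ pred0) ?filter_pred0 // => p.
rewrite mem_allseqs => /andP[/eqP sp _] /=.
by case: p sp => [|q p] //= _; rewrite andbF.
Qed.

Lemma sizeE (T : Type) (s : seq T) : size s = \sum_(x <- s) 1.
Proof. by rewrite sum1_size. Qed.

Lemma size_TP_fw b d u W : b \notin u -> size (TPd d u W) = size (TPd d u (fw b W)).
Proof.
elim/last_ind: W d u => [|W x IH] d u bu //.
case: d => [|d]; first by rewrite /TPd.
case/lastP: u bu => [|u y] bu; first by rewrite !TP_nil.
have bu' : b \notin u by apply: contra bu; rewrite mem_rcons inE => ->; rewrite orbT.
have by' : b != y by apply: contra bu => /eqP ->; rewrite mem_rcons inE eqxx.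
rewrite sizeE (TP_rcons (fun _ => 1)) -!sizeE /fw filter_rcons.
case: (eqVneq x b) => [->|xb] /=.
  by rewrite (negbTE by') mul0n addn0 IH.
by rewrite [RHS]sizeE (TP_rcons (fun _ => 1)) -!sizeE (IH _ (rcons u y)) // (IH _ u).
Qed.

Lemma iota_rcons m n : iota m n.+1 = rcons (iota m n) (m + n).
Proof. by rewrite -addn1 iotaD cats1. Qed.

Lemma post_rcons c W x : size (postuples c.+1 (rcons W x)) =
  size (postuples c.+1 W) + (x == c.+1) * size (postuples c W).
Proof.
rewrite /postuples -/(TPd c.+1 _ _) -/(TPd c.+1 _ _) -/(TPd c _ _).
by rewrite iota_rcons add1n sizeE (TP_rcons (fun _ => 1)) -!sizeE.
Qed.

Lemma count_take_le (a : nat) n (w : seq nat) : count_mem a (take n w) <= count_mem a w.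
Proof. by rewrite -{2}(cat_take_drop n w) count_cat leq_addr. Qed.

Lemma St_full c w : St c w (count_mem c w) = size (postuples c w).
Proof.
by rewrite /St (eq_count (a2 := predT)) ?count_predT // => p; rewrite /= count_take_le.
Qed.

Lemma St_rcons c w x r : 1 <= c ->
  St c (rcons w x) r = St c w r + (x == c) * ((count_mem c w < r) * size (postuples c.-1 w)).
Proof.
case: c => [//|c] _ /=.
rewrite /St /postuples -!/(TPd _ _ _) iota_rcons add1n.
rewrite !(cnt_sum _ (TPd _ _ _)) TP_rcons.
congr (_ + _).
  apply: eq_big_seq => p; rewrite mem_filter mem_allseqs => /andP[_ /andP[/eqP sp /allP H]].
  have lp : last 0 p < size w.
    case: p sp H => [//|q p] _ H; rewrite /=.
    by have := H (last q p) (mem_last q p); rewrite inE mem_iota add0n => /andP[_].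
  by rewrite -cats1 takel_cat.
case: (eqVneq x c.+1) => [->|]; rewrite ?mul0n ?mul1n //.
rewrite (eq_bigr (fun _ => (count_mem c.+1 w < r) : nat)); last first.
  by move=> p _; rewrite last_rcons take_oversize ?size_rcons // -cats1 count_cat /= eqxx addn1.
by rewrite sum_const mulnC.
Qed.

Lemma pst_rcons (T : eqType) (i j : T) s x r : i != j ->
  pst i j (rcons s x) r = pst i j s r + ((x == j) && (r == count_mem i s)).
Proof.
move=> ij; elim: s r => [|a s IH] r /=.
  case: (eqVneq x i) => [->|xi]; first by rewrite (negbTE ij); case: r.
  by rewrite addn0.
case: (eqVneq a i) => [->|ai] /=.
  rewrite (negbTE ij) !add0n; case: r => [|r] /=; first by rewrite add1n andbF.
  by rewrite IH add1n eqSS.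
by rewrite IH add0n addnA.

Qed.

Lemma pst_big (T : eqType) (i j : T) s r : count_mem i s < r -> pst i j s r = 0.
Proof.
elim: s r => [|a s IH] r //=.
case: (eqVneq a i) => [->|ai] /= H.
  case: r H => [|r] //= H; rewrite IH; [by rewrite andbF | lia].
rewrite IH; last by lia.
by case: r H => [|r] //=; rewrite andbF.

Qed.

Lemma sum_pick N M (G : nat -> nat) : M < N ->
  \sum_(0 <= r < N) G r * (r == M) = G M.
Proof.
move=> MN; rewrite (eq_bigr (fun r => (r == M) * G M)); last first.
  by move=> r _; case: eqP => [->|]; rewrite ?muln0 ?mul0n ?muln1 ?mul1n.
rewrite sum_ind count_uniq_mem; last by rewrite /index_iota iota_uniq.
by rewrite mem_index_iota MN mul1n.

Qed.

Lemma part2_ind c N W : 1 <= c -> count_mem c W < N ->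
  size (postuples c.+1 W) =
  \sum_(0 <= r < N) St c (fw c.+1 W) r * pst false true (mf c.+1 c W) r.
Proof.
move=> c1; elim/last_ind: W => [|W x IH] hW.
  by rewrite /postuples /= big1 // => r _; rewrite muln0.
have hW' : count_mem c W < N.
  by move: hW; rewrite -cats1 count_cat; lia.
have cb : c != c.+1 by apply/eqP; lia.
rewrite post_rcons /fw /mf !filter_rcons -/(fw c.+1 W) -/(mf c.+1 c W).
case: (eqVneq x c.+1) => [->|xb] /=.
  rewrite orbT map_rcons eqxx mul1n -/(mf c.+1 c W).
  under eq_bigr => r _ do rewrite pst_rcons // eqxx /= mulnDr.
  rewrite big_split /= -IH // count_mf_false // sum_pick //.
  rewrite -(@count_fw c.+1 c W cb) St_full /postuples -!/(TPd _ _ _) (@size_TP_fw c.+1 c (iota 1 c) W) //.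
  by rewrite mem_iota add1n ltnn andbF.
rewrite mul0n addn0 orbF.
case: (eqVneq x c) => [->|xc] /=.
  rewrite map_rcons (negbTE cb) -/(mf c.+1 c W).
  under eq_bigr => r _ do rewrite pst_rcons // /= addn0 St_rcons // eqxx mul1n mulnDl.
  rewrite big_split /= [X in _ = _ + X]big1 ?addn0; first exact: IH.
  move=> r _.
  case: (ltnP (count_mem c (fw c.+1 W)) r) => H; last by rewrite mul0n.
  by rewrite pst_big ?muln0 // count_mf_false // -(@count_fw c.+1 c W cb).
rewrite -/(mf c.+1 c W) (IH hW').
by apply: eq_bigr => r _; rewrite St_rcons // (negbTE xc) mul0n addn0.

Qed.

Lemma compat_cp d w Pi W : compatible d.+2 w Pi W = cp d.+1 d w Pi W.
Proof. by rewrite /compatible /cp /fw /mf; have -> : d.+2 - 2 = d by lia. Qed.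

Lemma sum_eq1 (T : eqType) (s : seq T) a : uniq s -> a \in s ->
  \sum_(x <- s) (a == x) = 1.
Proof.
move=> us ai; rewrite -cnt_sum (eq_count (a2 := pred1 a)); last by move=> x; rewrite /= eq_sym.
by rewrite count_uniq_mem // ai.
Qed.

Unset Implicit Arguments.
Theorem mainTheorem6 (k : nat) (m : nat -> nat) (hk : 3 <= k) :
  (forall (w : seq nat) (Pi : seq bool),
     inPM (k - 2) m w -> inPab (m (k - 2)) (m k.-1) Pi ->
     count (compatible k w Pi) (PM k.-1 m) = prodformula k m w Pi) /\
  (forall (w : seq nat) (Pi : seq bool) (W : seq nat),
     inPM (k - 2) m w -> inPab (m (k - 2)) (m k.-1) Pi ->
     inPM k.-1 m W -> compatible k w Pi W ->
     size (postuples k.-1 W) =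
       \sum_(0 <= r < (m (k - 2)).+1) St (k - 2) w r * piabstar Pi r) /\
  \sum_(w <- PM (k - 2) m) \sum_(Pi <- Pab (m (k - 2)) (m k.-1)) prodformula k m w Pi
    = multinomial k.-1 m.
Proof.
have [d kd] : exists d, k = d.+2 by exists (k - 2); lia.
subst k; have d1 : 1 <= d by lia.
have e2 : d.+2 - 2 = d by lia.
have P1 : forall w Pi, inPM d m w -> inPab (m d) (m d.+1) Pi ->
    count (compatible d.+2 w Pi) (PM d.+1 m) = prodformula d.+2 m w Pi.
  move=> w Pi hw hPi.
  by rewrite (eq_count (compat_cp d w Pi)) part1 // /prodformula e2.
rewrite e2 /=; split; first exact: P1.
split.
  move=> w Pi W hw hPi hW; rewrite compat_cp.
rewrite /cp; case/andP => fW mW.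
move/eqP: fW => fW.
move/eqP: mW => mW.
  have dc : d != d.+1 by apply/eqP; lia.
  rewrite (@part2_ind d (m d).+1 W d1); first by rewrite fW mW; apply: eq_bigr => r _; rewrite /piabstar pistar_pst.
  by rewrite -(count_mf_false W dc) mW; move: hPi => /andP[/eqP -> _].
rewrite multinomial_PM.
rewrite (eq_big_seq (fun w => \sum_(Pi <- Pab (m d) (m d.+1))
     \sum_(W <- PM d.+1 m) (compatible d.+2 w Pi W : nat))); last first.
  move=> w; rewrite mem_PM => hw; apply: eq_big_seq => Pi; rewrite mem_Pab => hPi.
  by rewrite -P1 // cnt_sum.
under eq_bigr => w _ do rewrite exchange_big.
rewrite exchange_big -sum1_size; apply: eq_big_seq => W; rewrite mem_PM => hW.
under eq_bigr => w _ do (under eq_bigr => Pi _ do rewrite compat_cp /cp -mulnb).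
under eq_bigr => w _ do rewrite -big_distrr /= (@sum_eq1 _ _ (mf d.+1 d W)) ?uniq_Pab ?mem_Pab ?mf_Pab // muln1.
by rewrite sum_eq1 ?uniq_PM ?mem_PM ?fw_PM.
Qed.
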